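(* Let $(\alpha_n)_{n\ge 0}$ be complex numbers with $|\alpha_n|<1$, and let $\Phi_n$, $\langle\cdot,\cdot\rangle$ and $\mu_{n,r,s}$ be as in the context. For all nonnegative integers $n,r,s$, the generalized moment $\mu_{n,r,s}$ is a polynomial with integer coefficients in $\{\alpha_j : 0\le j<n+r\}$ and $\{\overline{\alpha_j} : 0\le j<n+r\}$. Moreover, writing $\beta_j=-\overline{\alpha_j}$ for all $j$, $\mu_{n,r,s}$ can be written as a polynomial in the variables $\alpha_0,\alpha_1,\dots,\beta_0,\beta_1,\dots$ all of whose coefficients are positive integers, i.e. as an element of $\mathbb{Z}[\alpha_0,\alpha_1,\dots,\beta_0,\beta_1,\dots]$ with positive coefficients. Finally, the reciprocity \[ \mu_{-n,r,s}=\overline{\mu_{n,s,r}}\cdot\frac{\prod_{j=0}^{r-1}(1-|\alpha_j|^2)}{\prod_{j=0}^{s-1}(1-|\alpha_j|^2)} \] holds; in particular $\mu_{-n}=\overline{\mu_n}$.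
   Context: For a polynomial $f(z)=\sum_{k=0}^n a_kz^k$ of degree $n$, write $\overline{f}(z)=\sum_{k=0}^n\overline{a_k}z^k$ and $f^*(z)=z^n\overline{f}(1/z)$. Given complex numbers $\alpha_n$ with $|\alpha_n|<1$, define monic polynomials $\Phi_n$ with $\deg\Phi_n=n$ by $\Phi_0=1$ and $\Phi_{n+1}(z)=z\Phi_n(z)-\overline{\alpha_n}\,\Phi_n^*(z)$ (here $\Phi_n^*(z)=z^n\overline{\Phi_n}(1/z)$). Let $V$ be the space of Laurent polynomials in $z$ over $\mathbb{C}$, and let $\mathcal{L}$ be the unique linear functional on $V$ with $\mathcal{L}(1)=1$ and $\mathcal{L}(\Phi_m(z)\overline{\Phi_n}(1/z))=0$ for $m\ne n$ (for a Laurent polynomial $g$, $\overline{g}$ conjugates all coefficients). Define $\langle f,g\rangle=\mathcal{L}(f(z)\overline{g}(1/z))$ for $f,g\in V$; one has $\langle\Phi_s,\Phi_s\rangle=\prod_{j=0}^{s-1}(1-|\alpha_j|^2)$. For an integer $n$ and nonnegative integers $r,s$, the generalized moment is $\mu_{n,r,s}=\langle\Phi_s(z),z^n\Phi_r(z)\rangle/\langle\Phi_s(z),\Phi_s(z)\rangle$, and $\mu_n=\mu_{n,0,0}=\mathcal{L}(z^{-n})$. *)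

(* Defs.v *)
From HB Require Import structures.
From mathcomp Require Import all_boot all_order all_algebra.
From mathcomp Require Import mpoly.
Set Implicit Arguments. Unset Strict Implicit. Unset Printing Implicit Defensive.
Import Order.TTheory GRing.Theory Num.Theory.
Local Open Scope ring_scope.

Section OPUC.
Variable C : numClosedFieldType.

(* f^*(z) = z^n \bar f(1/z) for a polynomial f of (nominal) degree n *)
Definition rev_conj (n : nat) (f : {poly C}) : {poly C} :=
  \poly_(i < n.+1) (f`_(n - i))^*.

Fixpoint Phi (alpha : nat -> C) (n : nat) : {poly C} :=
  match n with
  | 0 => 1
  | n'.+1 => 'X * Phi alpha n' - (alpha n')^* *: rev_conj n' (Phi alpha n')
  end.

(* A linear functional L on Laurent polynomials C[z, z^-1] is determined by
   its values on the basis z^k, k : int; we encode L by  mom k = L(z^k).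
   Then for polynomials f, g and n : int,
     <f, z^n g> = L( f(z) * conj(z^n g)(1/z) )
                = sum_{i,j} f_i * conj(g_j) * L(z^(i - j - n)). *)
Definition ipz (mom : int -> C) (f g : {poly C}) (n : int) : C :=
  \sum_(i < size f) \sum_(j < size g) f`_i * (g`_j)^* * mom (i%:Z - j%:Z - n).

Definition ip (mom : int -> C) (f g : {poly C}) : C := ipz mom f g 0.

Definition is_OPUC_functional (alpha : nat -> C) (mom : int -> C) : Prop :=
  mom 0 = 1 /\
  forall m n : nat, m <> n -> ip mom (Phi alpha m) (Phi alpha n) = 0.

Definition gmu (alpha : nat -> C) (mom : int -> C) (n : int) (r s : nat) : C :=
  ipz mom (Phi alpha s) (Phi alpha r) n / ip mom (Phi alpha s) (Phi alpha s).

Definition mu (alpha : nat -> C) (mom : int -> C) (n : int) : C :=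
  gmu alpha mom n 0 0.

Definition val_ac (alpha : nat -> C) (k : nat) (i : 'I_(k + k)) : C :=
  match split i with
  | inl j => alpha j
  | inr j => (alpha j)^*
  end.

Definition val_ab (alpha : nat -> C) (k : nat) (i : 'I_(k + k)) : C :=
  match split i with
  | inl j => alpha j
  | inr j => - (alpha j)^*
  end.

Definition zeval (k : nat) (v : 'I_k -> C) (P : {mpoly int[k]}) : C :=
  mmap (fun z : int => z%:~R) v P.

End OPUC.
Arguments val_ac {C} alpha k i.
Arguments val_ab {C} alpha k i.

(* Main.v *)
Require Import Defs.
From HB Require Import structures.
From mathcomp Require Import all_boot all_order all_algebra.
From mathcomp Require Import mpoly.
From mathcomp Require Import zify ring.
Set Implicit Arguments. Unset Strict Implicit. Unset Printing Implicit Defensive.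
Import Order.TTheory GRing.Theory Num.Theory.
Local Open Scope ring_scope.

Lemma sum_widen (V : nmodType) m N (F : nat -> V) :
  (m <= N)%N -> (forall i, (m <= i)%N -> F i = 0) ->
  \sum_(i < m) F i = \sum_(i < N) F i.
Proof.
move=> mN HF; rewrite (big_ord_widen N F mN) big_mkcond; apply: eq_bigr => i _.
by case: ifP => // /negbT; rewrite -leqNgt => /HF ->.
Qed.

Lemma sum_delta (V : nmodType) N t (F : nat -> V) : (t < N)%N ->
  (forall s, s != t -> F s = 0) -> \sum_(s < N) F s = F t.
Proof.
move=> tN HF; rewrite (bigD1 (Ordinal tN)) //= big1 ?addr0 // => i ne.
apply: HF; apply: contra ne => /eqP e; apply/eqP/val_inj; exact e.
Qed.

Section IP.
Variable C : numClosedFieldType.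
Implicit Types (f g h : {poly C}) (mom : int -> C).

Definition tm mom f g (n : int) (i j : nat) := f`_i * (g`_j)^* * mom (i%:Z - j%:Z - n).

Lemma ipzE mom f g n N1 N2 : (size f <= N1)%N -> (size g <= N2)%N ->
  ipz mom f g n = \sum_(i < N1) \sum_(j < N2) tm mom f g n i j.
Proof.
move=> h1 h2; rewrite /ipz.
transitivity (\sum_(i < size f) \sum_(j < N2) tm mom f g n i j).
  apply: eq_bigr => i _.
  apply: (@sum_widen _ (size g) N2 (fun j => tm mom f g n i j)) => // j hj.
  by rewrite /tm (nth_default _ hj) conjC0 mulr0 mul0r.
apply: (@sum_widen _ (size f) N1 (fun i => \sum_(j < N2) tm mom f g n i j)) => // i hi.
by rewrite big1 // => j _; rewrite /tm (nth_default _ hi) !mul0r.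
Qed.

Lemma ipzDl mom f1 f2 g n : ipz mom (f1 + f2) g n = ipz mom f1 g n + ipz mom f2 g n.
Proof.
have h1 := leq_maxl (size f1) (size f2); have h2 := leq_maxr (size f1) (size f2).
rewrite !(@ipzE _ _ _ _ (maxn (size f1) (size f2)) (size g)) //; last exact: size_add.
rewrite -big_split; apply: eq_bigr => i _; rewrite -big_split; apply: eq_bigr => j _.
by rewrite /tm coefD !mulrDl.
Qed.

Lemma ipzDr mom f g1 g2 n : ipz mom f (g1 + g2) n = ipz mom f g1 n + ipz mom f g2 n.
Proof.
have h1 := leq_maxl (size g1) (size g2); have h2 := leq_maxr (size g1) (size g2).
rewrite !(@ipzE _ _ _ _ (size f) (maxn (size g1) (size g2))) //; last exact: size_add.
rewrite -big_split; apply: eq_bigr => i _; rewrite -big_split; apply: eq_bigr => j _.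
by rewrite /tm coefD rmorphD /= mulrDr !mulrDl.
Qed.

Lemma ipzZl mom c f g n : ipz mom (c *: f) g n = c * ipz mom f g n.
Proof.
rewrite !(@ipzE _ _ _ _ (size f) (size g)) //; last exact: size_scale_leq.
rewrite mulr_sumr; apply: eq_bigr => i _; rewrite mulr_sumr; apply: eq_bigr => j _.
by rewrite /tm coefZ !mulrA.
Qed.

Lemma ipzZr mom c f g n : ipz mom f (c *: g) n = c^* * ipz mom f g n.
Proof.
rewrite !(@ipzE _ _ _ _ (size f) (size g)) //; last exact: size_scale_leq.
rewrite mulr_sumr; apply: eq_bigr => i _; rewrite mulr_sumr; apply: eq_bigr => j _.
rewrite /tm coefZ rmorphM /=. ring.
Qed.

Lemma ipz0l mom g n : ipz mom 0 g n = 0.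
Proof. by rewrite /ipz size_poly0 big_ord0. Qed.
Lemma ipz0r mom f n : ipz mom f 0 n = 0.
Proof. by rewrite /ipz big1 // => i _; rewrite size_poly0 big_ord0. Qed.

Lemma ipzBl mom c f h g n : ipz mom (f - c *: h) g n = ipz mom f g n - c * ipz mom h g n.
Proof. by rewrite ipzDl -scaleNr ipzZl mulNr. Qed.
Lemma ipzBr mom c f h g n : ipz mom g (f - c *: h) n = ipz mom g f n - c^* * ipz mom g h n.
Proof. by rewrite ipzDr -scaleNr ipzZr rmorphN mulNr. Qed.

Lemma ipz_suml mom N (c : 'I_N -> C) (F : 'I_N -> {poly C}) g n :
  ipz mom (\sum_(s < N) c s *: F s) g n = \sum_(s < N) c s * ipz mom (F s) g n.
Proof.
rewrite (big_morph (fun f => ipz mom f g n) (fun x y => ipzDl mom x y g n) (ipz0l mom g n)).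
by apply: eq_bigr => s _; rewrite ipzZl.
Qed.

Lemma ipz_sumr mom N (c : 'I_N -> C) (F : 'I_N -> {poly C}) f n :
  ipz mom f (\sum_(s < N) c s *: F s) n = \sum_(s < N) (c s)^* * ipz mom f (F s) n.
Proof.
rewrite (big_morph (fun g => ipz mom f g n) (fun x y => ipzDr mom f x y n) (ipz0r mom f n)).
by apply: eq_bigr => s _; rewrite ipzZr.
Qed.

Lemma size_Xmul f : (size ('X * f)%R <= (size f).+1)%N.
Proof. by apply: leq_trans (size_mul_leq _ _) _; rewrite size_polyX. Qed.

Lemma ipz_X mom f g k : ipz mom f ('X * g) k = ipz mom f g (k + 1).
Proof.
rewrite (@ipzE _ _ _ _ (size f) (size g).+1) ?size_Xmul //.
rewrite (@ipzE _ _ _ _ (size f) (size g)) //.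
apply: eq_bigr => i _; rewrite big_ord_recl /tm coefXM eqxx rmorph0 mulr0 mul0r add0r.
apply: eq_bigr => j _; rewrite lift0 coefXM /=; congr (_ * mom _); lia.
Qed.

Lemma ipz_Xl mom f g k : ipz mom ('X * f) g k = ipz mom f g (k - 1).
Proof.
rewrite (@ipzE _ _ _ _ (size f).+1 (size g)) ?size_Xmul //.
rewrite (@ipzE _ _ _ _ (size f) (size g)) //.
rewrite big_ord_recl /tm big1 ?add0r; last by move=> j _; rewrite coefXM eqxx !mul0r.
apply: eq_bigr => i _; apply: eq_bigr => j _; rewrite lift0 coefXM /=; congr (_ * mom _); lia.
Qed.

Lemma ipz_Xn mom f g n k : ipz mom f ('X^n * g) k = ipz mom f g (k + n%:Z).
Proof.
elim: n k => [|n IH] k; first by rewrite expr0 mul1r addr0.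
by rewrite exprS -mulrA ipz_X IH; congr ipz; lia.
Qed.

Lemma ip_shift mom f g : ipz mom ('X * f) ('X * g) 0 = ipz mom f g 0.
Proof. by rewrite ipz_X ipz_Xl; congr ipz; lia. Qed.

End IP.

Section Gen.
Variable R : comRingType.
Variables (a b : nat -> R).
Definition Pr lo hi := \prod_(lo <= j < hi) (1 + a j * b j).
Definition Md s u := if u == 0%N then Pr 0 s else b u.-1 * Pr u s.
Definition Mm s t := if t == s.+1 then 1 else if (t <= s)%N then a s * Md s t else 0.
Fixpoint muE n r t := match n with
  | 0%N => ((r == t)%:R : R)
  | n'.+1 => \sum_(s < (n' + r).+1) muE n' r s * Mm s t end.

Lemma Mm_vanish s t : (s.+1 < t)%N -> Mm s t = 0.
Proof. by move=> h; rewrite /Mm gtn_eqF // leqNgt (ltn_trans _ h). Qed.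

Lemma muE_vanish n r t : (n + r < t)%N -> muE n r t = 0.
Proof.
elim: n t => [|n IH] t /= h; first by rewrite ltn_eqF.
by rewrite big1 // => s _; rewrite Mm_vanish ?mulr0 //; have := ltn_ord s; lia.
Qed.
End Gen.
Arguments Pr {R}. Arguments Md {R}. Arguments Mm {R}. Arguments muE {R}.

Section GenMorph.
Variables (R S : comRingType) (f : {rmorphism R -> S}).
Lemma muE_morph (a b : nat -> R) n r t :
  f (muE a b n r t) = muE (f \o a) (f \o b) n r t.
Proof.
elim: n t => [|n IH] t /=; first by rewrite rmorph_nat.
rewrite rmorph_sum; apply: eq_bigr => s _; rewrite rmorphM IH; congr (_ * _).
rewrite /Mm; case: eqP => _; first exact: rmorph1.
case: ifP => _; last exact: rmorph0.
rewrite rmorphM /Md; congr (_ * _).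
have hP lo : f (Pr a b lo s) = Pr (f \o a) (f \o b) lo s.
  by rewrite /Pr rmorph_prod; apply: eq_bigr => i _; rewrite rmorphD rmorph1 rmorphM.
by case: eqP => _; rewrite ?rmorphM hP.
Qed.
End GenMorph.

Section GenCongr.
Variables (R : comRingType).
Lemma Pr_congr (a b a' b' : nat -> R) lo hi :
  (forall j, (j < hi)%N -> a j = a' j /\ b j = b' j) -> Pr a b lo hi = Pr a' b' lo hi.
Proof.
move=> H; rewrite /Pr big_nat_cond [RHS]big_nat_cond; apply: eq_bigr => j /andP[/andP[_ hj] _].
by case: (H j hj) => -> ->.
Qed.

Lemma muE_congr (a b a' b' : nat -> R) n r t :
  (forall j, (j < n + r)%N -> a j = a' j /\ b j = b' j) ->
  muE a b n r t = muE a' b' n r t.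
Proof.
elim: n t => [|n IH] t H //=; apply: eq_bigr => s _.
rewrite IH; last by move=> j hj; apply: H; lia.
congr (_ * _); rewrite /Mm; case: eqP => // _; case: ifP => // hts.
have hs : (s < n.+1 + r)%N by have := ltn_ord s; lia.
case: (H s hs) => -> _; congr (_ * _); rewrite /Md.
case: eqP => ht.
  by apply: Pr_congr => j hj; apply: H; lia.
case: (H t.-1); first by lia.
move=> _ ->; congr (_ * _); apply: Pr_congr => j hj; apply: H; lia.
Qed.
End GenCongr.

Section Pos.
Variable k : nat.
Definition pos (p : {mpoly int[k]}) := forall m, 0 <= p@_m.
Lemma pos0 : pos 0. Proof. by move=> m; rewrite mcoeff0. Qed.
Lemma pos1 : pos 1. Proof. by move=> m; rewrite mcoeff1 ler0n. Qed.
Lemma posD p q : pos p -> pos q -> pos (p + q).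
Proof. by move=> hp hq m; rewrite mcoeffD addr_ge0. Qed.
Lemma posM p q : pos p -> pos q -> pos (p * q).
Proof. by move=> hp hq m; rewrite mcoeffM sumr_ge0 // => i _; rewrite mulr_ge0. Qed.
Lemma posX i : pos 'X_i.
Proof. by move=> m; rewrite mcoeffX ler0n. Qed.
Lemma posn n : pos n%:R.
Proof. by move=> m; rewrite mcoeffMn mcoeff1 -mulrnA ler0n. Qed.

Lemma muE_pos (a b : nat -> {mpoly int[k]}) n r t :
  (forall j, pos (a j)) -> (forall j, pos (b j)) -> pos (muE a b n r t).
Proof.
move=> ha hb.
have hPr lo hi : pos (Pr a b lo hi).
  by apply: big_ind => //; [exact: pos1 | exact: posM | move=> j _; apply: posD; [exact: pos1|exact: posM]].
elim: n t => [|n IH] t /=; first exact: posn.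
apply: big_ind => //; [exact: pos0 | exact: posD | move=> s _; apply: posM => //].
rewrite /Mm; case: eqP => _; first exact: pos1.
case: ifP => _; last exact: pos0.
apply: posM => //; rewrite /Md; case: eqP => _ //; exact: posM.
Qed.
End Pos.

Section Phis.
Variable C : numClosedFieldType.
Implicit Types (f g : {poly C}).

Lemma coef_rev n f i : (rev_conj n f)`_i = if (i <= n)%N then (f`_(n - i))^* else 0.
Proof. by rewrite /rev_conj coef_poly ltnS. Qed.

Lemma size_rev n f : (size (rev_conj n f) <= n.+1)%N.
Proof. exact: size_poly. Qed.

Lemma rev_conjB n c f g : rev_conj n (f - c *: g) = rev_conj n f - c^* *: rev_conj n g.
Proof.
apply/polyP => i; rewrite coefB coefZ !coef_rev; case: ifP => _; last by rewrite mulr0 subr0.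
by rewrite coefB coefZ rmorphB rmorphM.
Qed.

Lemma rev_conjXM n f : (size f <= n.+1)%N -> rev_conj n.+1 ('X * f) = rev_conj n f.
Proof.
move=> hf; apply/polyP => i; rewrite !coef_rev coefXM.
case: (ltnP n i) => h.
  case: ifP => // h2; have -> : i = n.+1 by lia.
  by rewrite subnn eqxx conjC0.
rewrite ifT; last by lia.
rewrite ifF; last by lia.
by congr (_^*); congr (_`_ _); lia.
Qed.

Lemma rev_conjX n g : (size g <= n.+1)%N -> rev_conj n.+1 g = 'X * rev_conj n g.
Proof.
move=> hg; apply/polyP => i; rewrite coefXM !coef_rev.
case: i => [|i] /=.
  by rewrite subn0 nth_default ?conjC0.
rewrite !ltnS; case: ifP => // _; congr (_^*); congr (_`_ _); lia.
Qed.

Lemma rev_conjK n f : (size f <= n.+1)%N -> rev_conj n (rev_conj n f) = f.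
Proof.
move=> hf; apply/polyP => i; rewrite !coef_rev.
case: ifP => h.
  by rewrite ifT ?leq_subr // conjCK subKn.
move/negbT: h; rewrite -ltnNge => h; by rewrite nth_default // (leq_trans hf h).
Qed.

Variable alpha : nat -> C.
Local Notation Ph := (Phi alpha).
Definition bet j := - (alpha j)^*.

Lemma size_Phi s : (size (Ph s) <= s.+1)%N.
Proof.
elim: s => [|s IH] /=; first by rewrite size_poly1.
apply: leq_trans (size_add _ _) _; rewrite size_opp geq_max; apply/andP; split.
  by apply: leq_trans (size_Xmul _) _.
by apply: leq_trans (size_scale_leq _ _) _; apply: leq_trans (size_rev _ _) _.
Qed.

Lemma Phi_top s : (Ph s)`_s = 1.
Proof.
elim: s => [|s IH] /=; first by rewrite coef1.
by rewrite coefB coefXM /= IH coefZ coef_rev ltnn mulr0 subr0.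
Qed.

Lemma PhiS_X s : 'X * Ph s = Ph s.+1 + (alpha s)^* *: rev_conj s (Ph s).
Proof. by rewrite /= subrK. Qed.

Lemma rev_PhiS s : rev_conj s.+1 (Ph s.+1) =
  (1 - alpha s * (alpha s)^*) *: rev_conj s (Ph s) - alpha s *: Ph s.+1.
Proof.
have E : Ph s.+1 = 'X * Ph s - (alpha s)^* *: rev_conj s (Ph s) by [].
rewrite {1}E rev_conjB conjCK rev_conjXM ?size_Phi // rev_conjX ?size_rev //.
rewrite rev_conjK ?size_Phi // PhiS_X scalerDr scalerA scalerBl scale1r.
by rewrite opprD addrA addrAC.
Qed.

Lemma rev_Phi_exp s : rev_conj s (Ph s) = \sum_(u < s.+1) (Md alpha bet s u)^* *: Ph u.
Proof.
elim: s => [|s IH].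
  rewrite big_ord1 /Md /= /Pr big_geq // rmorph1 scale1r.
  by apply/polyP => i; rewrite coef_rev !coef1; case: i => [|i] //=; rewrite conjC1.
rewrite rev_PhiS IH [in RHS]big_ord_recr /= scaler_sumr; congr (_ + _).
  apply: eq_bigr => u _; rewrite scalerA; congr (_ *: _).
  have hu : (u <= s)%N by have := ltn_ord u; lia.
  have hc : (1 + alpha s * bet s)^* = 1 - alpha s * (alpha s)^*.
    by rewrite /bet rmorphD rmorph1 rmorphM rmorphN /= conjCK mulrN mulrC.
  rewrite /Md; case: eqP => _; rewrite /Pr big_nat_recr //= ?mulrA.
    by rewrite [X in _ = X]rmorphM /= hc mulrC.
  by rewrite [X in _ = X]rmorphM /= hc mulrC.
by rewrite /Md /= /Pr big_geq // mulr1 /bet rmorphN /= conjCK scaleNr.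
Qed.

Lemma X_Phi_exp s : 'X * Ph s = \sum_(t < s.+2) (Mm alpha bet s t)^* *: Ph t.
Proof.
rewrite PhiS_X rev_Phi_exp [in RHS]big_ord_recr /= /Mm eqxx rmorph1 scale1r addrC.
congr (_ + _); rewrite scaler_sumr; apply: eq_bigr => t _.
rewrite (ltn_eqF (ltn_ord t)) -ltnS ltn_ord rmorphM scalerA //.
Qed.

Lemma X_Phi_expN s N : (s.+1 < N)%N -> 'X * Ph s = \sum_(t < N) (Mm alpha bet s t)^* *: Ph t.
Proof.
move=> hN; rewrite X_Phi_exp.
apply: (@sum_widen _ s.+2 N (fun t => (Mm alpha bet s t)^* *: Ph t)) => // t ht.
by rewrite Mm_vanish // conjC0 scale0r.
Qed.

Lemma Xn_Phi_exp n r N : (n + r < N)%N ->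
  'X^n * Ph r = \sum_(t < N) (muE alpha bet n r t)^* *: Ph t.
Proof.
elim: n N => [|n IH] N hN.
  rewrite expr0 mul1r (@sum_delta _ N r (fun t => (muE alpha bet 0 r t)^* *: Ph t)) //=.
    by rewrite eqxx rmorph1 scale1r.
  by move=> s /negbTE; rewrite eq_sym => ->; rewrite conjC0 scale0r.
rewrite exprS -mulrA (IH (n + r).+1) // mulr_sumr.
transitivity (\sum_(s < (n + r).+1) \sum_(t < N)
    ((muE alpha bet n r s)^* * (Mm alpha bet s t)^*) *: Ph t).
  apply: eq_bigr => s _; rewrite -scalerAr (X_Phi_expN (N := N)); last by have := ltn_ord s; lia.
  by rewrite scaler_sumr; apply: eq_bigr => t _; rewrite scalerA.
rewrite exchange_big /=; apply: eq_bigr => t _.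
by rewrite -scaler_suml rmorph_sum; congr (_ *: _); apply: eq_bigr => s _; rewrite rmorphM.
Qed.

End Phis.

Lemma rev0 (C : numClosedFieldType) : rev_conj 0 (1 : {poly C}) = 1.
Proof. by apply/polyP => i; rewrite coef_rev !coef1; case: i => [|i] //=; rewrite conjC1. Qed.

Section Norms.
Variable C : numClosedFieldType.
Variable alpha : nat -> C.
Variable mom : int -> C.
Hypothesis hmom0 : mom 0 = 1.
Hypothesis horth : forall m n : nat, m <> n -> ip mom (Phi alpha m) (Phi alpha n) = 0.
Local Notation Ph := (Phi alpha).
Lemma horthz m n : m <> n -> ipz mom (Ph m) (Ph n) 0 = 0.
Proof. exact: horth. Qed.
Definition Pn s := \prod_(j < s) (1 - `|alpha j| ^+ 2).

Lemma orthG_A s : ipz mom (Ph s.+1) (rev_conj s (Ph s)) 0 = 0.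
Proof.
rewrite rev_Phi_exp ipz_sumr big1 // => u _.
by rewrite horthz ?mulr0 // => e; have := ltn_ord u; lia.
Qed.

Lemma orthA_G s : ipz mom (rev_conj s (Ph s)) (Ph s.+1) 0 = 0.
Proof.
rewrite rev_Phi_exp ipz_suml big1 // => u _.
by rewrite horthz ?mulr0 // => e; have := ltn_ord u; lia.
Qed.

Lemma norms s : ipz mom (Ph s) (Ph s) 0 = Pn s /\
  ipz mom (rev_conj s (Ph s)) (rev_conj s (Ph s)) 0 = Pn s.
Proof.
have base : ipz mom 1 1 0 = 1.
  rewrite (@ipzE _ _ _ _ _ 1 1) ?size_poly1 // !big_ord1 /tm coef1 /= conjC1 !mul1r.
  exact: hmom0.
elim: s => [|s [IH1 IH2]].
  by rewrite /Pn big_ord0 /= rev0 base.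
set c := alpha s.
have hG : Ph s.+1 = 'X * Ph s - c^* *: rev_conj s (Ph s) by [].
have o1 := orthG_A s; have o2 := orthA_G s.
have hPn : Pn s.+1 = Pn s * (1 - c * c^*) by rewrite /Pn big_ord_recr /= normCK.
have hAXF : ipz mom (rev_conj s (Ph s)) ('X * Ph s) 0 = c * Pn s.
  by rewrite PhiS_X ipzDr ipzZr conjCK o2 IH2 add0r.
have hGG : ipz mom (Ph s.+1) (Ph s.+1) 0 = Pn s.+1.
  rewrite {2}hG ipzBr conjCK o1 mulr0 subr0 hG ipzBl ip_shift hAXF IH1 hPn.
  ring.
split => //.
rewrite rev_PhiS -/c.
have hd : (1 - c * c^*)^* = 1 - c * c^* by rewrite rmorphB rmorph1 rmorphM /= conjCK mulrC.
move: o1 o2 hGG IH2; move: (Ph s.+1) (rev_conj s (Ph s)) => G A o1 o2 hGG IH2.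
rewrite !ipzBl !ipzBr !ipzZl !ipzZr o1 o2 IH2 hGG hd hPn.
ring.
Qed.

Lemma Pn_neq0 (ha : forall j, `|alpha j| < 1) s : Pn s != 0.
Proof.
apply/prodf_neq0 => j _; rewrite subr_eq0 gt_eqF //.
by rewrite exprn_ilt1 ?normr_ge0.
Qed.

Lemma gmu_muE (ha : forall j, `|alpha j| < 1) n r t :
  gmu alpha mom n%:Z r t = muE alpha (bet alpha) n r t.
Proof.
rewrite /gmu /ip.
have := ipz_Xn mom (Ph t) (Ph r) n 0; rewrite add0r => <-.
have hN : (n + r < (maxn (n + r) t).+1)%N by lia.
have ht : (t < (maxn (n + r) t).+1)%N by lia.
rewrite (Xn_Phi_exp alpha hN) ipz_sumr (bigD1 (Ordinal ht)) //= big1 ?addr0.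
  by rewrite conjCK mulfK // (proj1 (norms t)) Pn_neq0.
move=> i /eqP ne; rewrite horthz ?mulr0 // => e; apply: ne; apply: val_inj => /=.
exact/esym.
Qed.

End Norms.

Section Herm.
Variable C : numClosedFieldType.

Lemma ipz_conj (mom : int -> C) f g (n : int) :
  ipz (fun k => (mom (-k))^*) f g n = (ipz mom g f (- n))^*.
Proof.
rewrite /ipz rmorph_sum /=.
under [in RHS]eq_bigr do rewrite rmorph_sum /=.
rewrite [in RHS]exchange_big /=; apply: eq_bigr => i _; apply: eq_bigr => j _.
rewrite !rmorphM /= conjCK [f`_i * _]mulrC; congr (_ * (mom _)^*); lia.
Qed.

Lemma mom_pos (alpha : nat -> C) (mom : int -> C) : is_OPUC_functional alpha mom -> forall K : nat,
  mom (K.+1)%:Z = - \sum_(i < K.+1) (Phi alpha K.+1)`_i * mom i%:Z.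
Proof.
case=> _ ho K.
have H : ip mom (Phi alpha K.+1) (Phi alpha 0) = 0 by apply: ho; lia.
have ht := Phi_top alpha K.+1; have hs := size_Phi alpha K.+1.
move: H ht hs; rewrite /ip (@ipzE _ _ _ _ _ K.+2 1) ?size_Phi //.
move: (Phi alpha K.+1) => P H ht hs; move: H.
under eq_bigr do rewrite big_ord1.
rewrite big_ord_recr /= /tm ht coef1 /= conjC1 !mulr1 mul1r subr0 subr0.
move/eqP; rewrite addrC addr_eq0 => /eqP ->; congr (- _); apply: eq_bigr => i _.
by rewrite mulr1 !subr0.
Qed.

Lemma mom_neg (alpha : nat -> C) (mom : int -> C) : is_OPUC_functional alpha mom -> forall K : nat,
  mom (- (K.+1)%:Z) = - \sum_(j < K.+1) ((Phi alpha K.+1)`_j)^* * mom (- j%:Z).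
Proof.
case=> _ ho K.
have H : ip mom (Phi alpha 0) (Phi alpha K.+1) = 0 by apply: ho; lia.
have ht := Phi_top alpha K.+1; have hs := size_Phi alpha K.+1.
move: H ht hs; rewrite /ip (@ipzE _ _ _ _ _ 1 K.+2) ?size_Phi //.
move: (Phi alpha K.+1) => P H ht hs; move: H; rewrite big_ord1.
rewrite big_ord_recr /= /tm ht coef1 /= conjC1 !mul1r subr0 sub0r.
move/eqP; rewrite addrC addr_eq0 => /eqP ->; congr (- _); apply: eq_bigr => i _.
by rewrite mul1r subr0 sub0r.
Qed.

Lemma OPUC_uniq (alpha : nat -> C) (m1 m2 : int -> C) : is_OPUC_functional alpha m1 -> is_OPUC_functional alpha m2 ->
  forall k, m1 k = m2 k.
Proof.
move=> h1 h2.
suff H : forall K (k : int), (absz k <= K)%N -> m1 k = m2 k by move=> k; exact: (H _ k (leqnn _)).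
elim => [|K IH] k hk.
  have -> : k = 0 by lia.
  by rewrite h1.1 h2.1.
case: (leqP (absz k) K) => hK; first exact: IH.
have : k = (K.+1)%:Z \/ k = - (K.+1)%:Z by lia.
case => ->.
  rewrite (mom_pos h1) (mom_pos h2); congr (- _); apply: eq_bigr => i _.
  by rewrite IH //; have := ltn_ord i; lia.
rewrite (mom_neg h1) (mom_neg h2); congr (- _); apply: eq_bigr => i _.
by rewrite IH //; have := ltn_ord i; lia.
Qed.

Lemma herm (alpha : nat -> C) (mom : int -> C) : is_OPUC_functional alpha mom -> forall k, mom (-k) = (mom k)^*.
Proof.
move=> h k.
have h' : is_OPUC_functional alpha (fun k => (mom (-k))^*).
  split; first by rewrite oppr0 h.1 conjC1.
  move=> m n ne; rewrite /ip ipz_conj oppr0.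
  have := h.2 n m (fun e => ne (esym e)); rewrite /ip => ->; exact: conjC0.
have := OPUC_uniq h' h k => /= <-; by rewrite conjCK.
Qed.

Lemma ipz_neg (alpha : nat -> C) (mom : int -> C) : is_OPUC_functional alpha mom ->
  forall f g n, ipz mom f g (- n) = (ipz mom g f n)^*.
Proof.
move=> h f g n.
rewrite -[n in RHS]opprK -ipz_conj /ipz; apply: eq_bigr => i _; apply: eq_bigr => j _.
by rewrite (herm h) conjCK opprK.
Qed.

End Herm.

Section Vars.
Variable k : nat.
Definition aV (j : nat) : {mpoly int[k + k]} :=
  match (insub j : option 'I_k) with Some i => 'X_(lshift k i) | None => 0 end.
Definition bV (j : nat) : {mpoly int[k + k]} :=
  match (insub j : option 'I_k) with Some i => 'X_(rshift k i) | None => 0 end.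

Lemma zeval_X (C : numClosedFieldType) (v : 'I_(k + k) -> C) i : mmap (intr : int -> C) v 'X_i = v i.
Proof. by rewrite mmapX mmap1U. Qed.

Lemma aV_eval (C : numClosedFieldType) (v : 'I_(k + k) -> C) j (hj : (j < k)%N) :
  mmap (intr : int -> C) v (aV j) = v (lshift k (Ordinal hj)).
Proof. by rewrite /aV (insubT (fun x => x < k)%N hj) zeval_X. Qed.

Lemma bV_eval (C : numClosedFieldType) (v : 'I_(k + k) -> C) j (hj : (j < k)%N) :
  mmap (intr : int -> C) v (bV j) = v (rshift k (Ordinal hj)).
Proof. by rewrite /bV (insubT (fun x => x < k)%N hj) zeval_X. Qed.

Lemma aV_pos j : pos (aV j).
Proof. rewrite /aV; case: (insub j) => [i|]; [exact: posX | exact: pos0]. Qed.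
Lemma bV_pos j : pos (bV j).
Proof. rewrite /bV; case: (insub j) => [i|]; [exact: posX | exact: pos0]. Qed.

Lemma val_ac_l (C : numClosedFieldType) (alpha : nat -> C) (i : 'I_k) :
  val_ac alpha k (lshift k i) = alpha i.
Proof. by rewrite /val_ac (unsplitK (inl _ i)). Qed.
Lemma val_ac_r (C : numClosedFieldType) (alpha : nat -> C) (i : 'I_k) :
  val_ac alpha k (rshift k i) = (alpha i)^*.
Proof. by rewrite /val_ac (unsplitK (inr _ i)). Qed.
Lemma val_ab_l (C : numClosedFieldType) (alpha : nat -> C) (i : 'I_k) :
  val_ab alpha k (lshift k i) = alpha i.
Proof. by rewrite /val_ab (unsplitK (inl _ i)). Qed.
Lemma val_ab_r (C : numClosedFieldType) (alpha : nat -> C) (i : 'I_k) :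
  val_ab alpha k (rshift k i) = - (alpha i)^*.
Proof. by rewrite /val_ab (unsplitK (inr _ i)). Qed.
End Vars.

Lemma Pn_real (C : numClosedFieldType) (alpha : nat -> C) s : (Pn alpha s)^* = Pn alpha s.
Proof.
rewrite /Pn rmorph_prod; apply: eq_bigr => j _.
by rewrite rmorphB rmorph1 rmorphXn /= conj_normC.
Qed.

Theorem theorem3p2 (C : numClosedFieldType) :
  (* integrality: a polynomial with integer coefficients in alpha_j, conj alpha_j, j < n + r *)
  (forall n r s : nat, exists P : {mpoly int[((n + r) + (n + r))%N]},
     forall (alpha : nat -> C) (mom : int -> C),
       (forall j, `|alpha j| < 1) -> is_OPUC_functional alpha mom ->
       gmu alpha mom n%:Z r s = zeval (val_ac alpha (n + r)%N) P) /\
  (* positivity: a polynomial in alpha_j, beta_j = - conj alpha_j with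
     nonnegative (i.e. all nonzero coefficients positive) integer coefficients *)
  (forall n r s : nat, exists (k : nat) (Q : {mpoly int[(k + k)%N]}),
     (forall m, 0 <= Q@_m) /\
     forall (alpha : nat -> C) (mom : int -> C),
       (forall j, `|alpha j| < 1) -> is_OPUC_functional alpha mom ->
       gmu alpha mom n%:Z r s = zeval (val_ab alpha k) Q) /\
  (* reciprocity *)
  (forall (alpha : nat -> C) (mom : int -> C),
     (forall j, `|alpha j| < 1) -> is_OPUC_functional alpha mom ->
     (forall (n : int) (r s : nat),
        gmu alpha mom (- n) r s =
        (gmu alpha mom n s r)^* *
          ((\prod_(j < r) (1 - `|alpha j| ^+ 2)) / (\prod_(j < s) (1 - `|alpha j| ^+ 2)))) /\
     (forall n : int, mu alpha mom (- n) = (mu alpha mom n)^*)).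
Proof.
split; [|split].
- move=> n r s.
  exists (muE (aV (n + r)) (fun j => - bV (n + r) j) n r s).
  move=> alpha mom ha hop.
  rewrite (gmu_muE hop.1 hop.2 ha) /zeval.
  rewrite (muE_morph (mmap (intr : int -> C) (val_ac alpha (n + r)))).
  apply: muE_congr => j hj /=; split.
    by rewrite (aV_eval _ hj) val_ac_l.
  by rewrite rmorphN /= (bV_eval _ hj) val_ac_r.
- move=> n r s; exists (n + r)%N, (muE (aV (n + r)) (bV (n + r)) n r s); split.
    by apply: muE_pos; [exact: aV_pos | exact: bV_pos].
  move=> alpha mom ha hop.
  rewrite (gmu_muE hop.1 hop.2 ha) /zeval.
  rewrite (muE_morph (mmap (intr : int -> C) (val_ab alpha (n + r)))).
  apply: muE_congr => j hj /=; split.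
    by rewrite (aV_eval _ hj) val_ab_l.
  by rewrite (bV_eval _ hj) val_ab_r.
- move=> alpha mom ha hop.
  have rec : forall (n : int) (r s : nat),
      gmu alpha mom (- n) r s =
      (gmu alpha mom n s r)^* *
        ((\prod_(j < r) (1 - `|alpha j| ^+ 2)) / (\prod_(j < s) (1 - `|alpha j| ^+ 2))).
    move=> n r s.
    rewrite /gmu (ipz_neg hop) /ip (proj1 (norms hop.1 hop.2 r)) (proj1 (norms hop.1 hop.2 s)).
    rewrite -/(Pn alpha r) -/(Pn alpha s).
    rewrite rmorphM /= fmorphV /= Pn_real mulrA mulfVK //; exact: Pn_neq0.
  split => // n.
  by rewrite /mu rec !big_ord0 divr1 mulr1.
Qed.
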